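(* Let $\beta>0$, $n\ge1$, and let $V\in\mathbb R^{d\times d}$ be real symmetric with orthonormal eigenbasis $(e_k)_{k=1}^d$ and eigenvalues $(\lambda_k)_{k=1}^d$. Consider the system on $(\mathbb S^{d-1})^n$ \[ \dot x_i=P^\perp_{x_i}\Big(\frac1{Z_i}\sum_{j=1}^n e^{\beta\langle x_i,Vx_j\rangle}Vx_j\Big),\qquad Z_i=\sum_{k=1}^n e^{\beta\langle x_i,Vx_k\rangle}, \] and fix $p\in[d]$. The homogeneous configuration $x_i^*=e_p$ for all $i\in[n]$ is an equilibrium. It is linearly asymptotically stable if $\lambda_p>0$ and $\lambda_k<\lambda_p$ for all $k\neq p$. It is linearly unstable if either $\lambda_p<0$ or $\lambda_k>\lambda_p$ for some $k\neq p$.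
   Context: $P^\perp_xy=y-\langle x,y\rangle x$ is the projection onto the tangent space $T_x\mathbb S^{d-1}$. Linear stability refers to the linearization of the vector field at the equilibrium on the tangent space $T_{x^*}(\mathbb S^{d-1})^n$ (tangent perturbations $x_i=(x_i^*+y_i)/\|x_i^*+y_i\|$ with $\langle y_i,x_i^*\rangle=0$): linearly asymptotically stable means all eigenvalues of this linearization have negative real part; linearly unstable means it has an eigenvalue with positive real part. *)

(* Defs.v *)
From mathcomp Require Import all_boot all_algebra all_classical all_reals all_analysis.
From mathcomp Require Import complex.
Import GRing.Theory Num.Theory.
Set Implicit Arguments. Unset Strict Implicit. Unset Printing Implicit Defensive.
Local Open Scope ring_scope.

(* Points of R^d are row vectors 'rV[R]_d; a configuration (x_1,...,x_n) of
   n points is the n x d matrix whose i-th row is x_i. *)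

Definition dotv (R : realType) (d : nat) (x y : 'rV[R]_d) : R := (x *m y^T) 0 0.

Definition projT (R : realType) (d : nat) (x y : 'rV[R]_d) : 'rV[R]_d :=
  y - dotv x y *: x.

(* The vector V x (as a row vector: (V x)^T = x^T V^T). *)
Definition Vapp (R : realType) (d : nat) (V : 'M[R]_d) (x : 'rV[R]_d) : 'rV[R]_d :=
  x *m V^T.

Definition Zpart (R : realType) (n d : nat) (beta : R) (V : 'M[R]_d)
    (X : 'M[R]_(n, d)) (i : 'I_n) : R :=
  \sum_(k < n) expR (beta * dotv (row i X) (Vapp V (row k X))).

Definition attn_field (R : realType) (n d : nat) (beta : R) (V : 'M[R]_d)
    (X : 'M[R]_(n, d)) : 'M[R]_(n, d) :=
  \matrix_(i < n)
    projT (row i X)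
      ((Zpart beta V X i)^-1 *:
         \sum_(j < n) (expR (beta * dotv (row i X) (Vapp V (row j X))) *:
                         Vapp V (row j X))).

Definition Xstar (R : realType) (n d : nat) (e : 'I_d -> 'rV[R]_d) (p : 'I_d)
  : 'M[R]_(n, d) := \matrix_(i < n) e p.

(* Coordinates on the tangent space T_{x*}(S^{d-1})^n: the orthonormal basis
   e_k (k <> p) of T_{e_p} S^{d-1}, indexed by lift p j, j : 'I_d.-1, in each
   of the n factors. *)
Definition chart_pt (R : realType) (n d : nat) (e : 'I_d -> 'rV[R]_d) (p : 'I_d)
    (c : 'I_n -> 'I_d.-1 -> R) : 'M[R]_(n, d) :=
  \matrix_(i < n)
    let w := e p + \sum_(j < d.-1) (c i j *: e (lift p j)) in
    (Num.sqrt (dotv w w))^-1 *: w.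

(* The vector field expressed in the chart coordinates y: since
   <y_i, e_p> = 0, y_i = x_i / <x_i,e_p> - e_p, so the (i, lift p j)
   coordinate of y_i is <x_i,e_k>/<x_i,e_p> (k = lift p j), whose time
   derivative along xdot = F(x) is
   (<F_i,e_k><x_i,e_p> - <x_i,e_k><F_i,e_p>) / <x_i,e_p>^2. *)
Definition chart_field (R : realType) (n d : nat) (beta : R) (V : 'M[R]_d)
    (e : 'I_d -> 'rV[R]_d) (p : 'I_d) (c : 'I_n -> 'I_d.-1 -> R)
    (ij : 'I_n * 'I_d.-1) : R :=
  let X := chart_pt e p c in
  let F := attn_field beta V X in
  let xi := row ij.1 X in
  let Fi := row ij.1 F in
  let ek := e (lift p ij.2) in
  (dotv Fi ek * dotv xi (e p) - dotv xi ek * dotv Fi (e p)) / (dotv xi (e p)) ^+ 2.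

(* Index type of the tangent coordinates and the Jacobian at y = 0 of the
   chart vector field (the linearization on T_{x*}(S^{d-1})^n), as a square
   matrix of size n(d-1) = #|'I_n * 'I_d.-1|. *)
Definition tidx (n d : nat) := ('I_n * 'I_d.-1)%type.

Definition linearization (R : realType) (n d : nat) (beta : R) (V : 'M[R]_d)
    (e : 'I_d -> 'rV[R]_d) (p : 'I_d) : 'M[R]_(#|{: tidx n d}|) :=
  \matrix_(a, b)
    derive1 (fun t : R =>
      chart_field beta V e p
        (fun i j => if (i, j) == enum_val b then t else 0) (enum_val a)) 0.

Definition cplx_eigenvalue (R : realType) (N : nat) (A : 'M[R]_N) (z : R[i]) : Prop :=
  eigenvalue (map_mx (fun x => (x%:C)%C) A) z.

Definition lin_asymp_stable (R : realType) (N : nat) (A : 'M[R]_N) : Prop :=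
  forall z : R[i], cplx_eigenvalue A z -> complex.Re z < 0.

Definition lin_unstable (R : realType) (N : nat) (A : 'M[R]_N) : Prop :=
  exists z : R[i], cplx_eigenvalue A z /\ 0 < complex.Re z.

(* Main.v *)
Require Import Defs.
From mathcomp Require Import all_boot all_algebra all_classical all_reals all_analysis.
From mathcomp Require Import complex.
From mathcomp Require Import ring zify.
Import GRing.Theory Num.Theory numFieldNormedType.Exports.
Local Open Scope ring_scope.
Local Open Scope classical_set_scope.
Local Open Scope ring_scope.
Set Implicit Arguments. Unset Strict Implicit. Unset Printing Implicit Defensive.
Section Dot.
Variables (R : realType) (d : nat).
Implicit Types (x y z : 'rV[R]_d).

Lemma dotvDl x y z : dotv (x + y) z = dotv x z + dotv y z.
Proof. by rewrite /dotv mulmxDl mxE. Qed.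
Lemma dotvZl a x z : dotv (a *: x) z = a * dotv x z.
Proof. by rewrite /dotv -scalemxAl mxE. Qed.
Lemma dotvC x y : dotv x y = dotv y x.
Proof. rewrite /dotv; have -> : (y *m x^T) 0 0 = ((y *m x^T)^T) 0 0 by rewrite [RHS]mxE.
by rewrite trmx_mul trmxK. Qed.
Lemma dotvDr x y z : dotv z (x + y) = dotv z x + dotv z y.
Proof. by rewrite dotvC dotvDl !(dotvC z). Qed.
Lemma dotvZr a x z : dotv z (a *: x) = a * dotv z x.
Proof. by rewrite dotvC dotvZl dotvC. Qed.
Lemma dotv0l z : dotv 0 z = 0.
Proof. by rewrite /dotv mul0mx mxE. Qed.
Lemma dotv0r z : dotv z 0 = 0.
Proof. by rewrite dotvC dotv0l. Qed.
Lemma dotv_suml (I : finType) (f : I -> 'rV[R]_d) z :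
  dotv (\sum_i f i) z = \sum_i dotv (f i) z.
Proof. by rewrite /dotv mulmx_suml summxE. Qed.
Lemma VappD (V : 'M[R]_d) x y : Vapp V (x + y) = Vapp V x + Vapp V y.
Proof. by rewrite /Vapp mulmxDl. Qed.
Lemma VappZ (V : 'M[R]_d) a x : Vapp V (a *: x) = a *: Vapp V x.
Proof. by rewrite /Vapp scalemxAl. Qed.
End Dot.

Lemma derive1_tg (R : realType) (f g : R -> R) :
  (forall t, f t = t * g t) -> {for 0%R, continuous g} -> derive1 f 0 = g 0.
Proof.
move=> fE gc; rewrite /derive1; apply: cvg_lim; first exact: norm_hausdorff.
have H1 : g @ 0^' --> g 0.
  by apply: cvg_trans gc; apply: cvg_app; apply: cvg_within.
apply: (cvg_trans _ H1).
apply: near_eq_cvg; near=> h.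
have hn0 : h != 0 by near: h; exact: nbhs_dnbhs_neq.
rewrite !fE addr0 mul0r subr0 /=. by change (g h = h^-1 * (h * g h)); rewrite mulKf.
Unshelve. all: by end_near.
Qed.

Section Cont.
Variable R : realType.
Local Notation C f := ({for (0:R), continuous (f : R -> R)}).

Lemma cC (a : R) : C (fun _ => a).
Proof. exact: cvg_cst. Qed.
Lemma cI : C (fun t => t).
Proof. exact: cvg_id. Qed.
Lemma cD f g : C f -> C g -> C (fun t => f t + g t).
Proof. by move=> ? ?; apply: cvgD. Qed.
Lemma cM f g : C f -> C g -> C (fun t => f t * g t).
Proof. by move=> ? ?; apply: cvgM. Qed.
Lemma cN f : C f -> C (fun t => - f t).
Proof. by move=> ?; apply: cvgN. Qed.
Lemma cB f g : C f -> C g -> C (fun t => f t - g t).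
Proof. by move=> ? ?; apply: cD => //; apply: cN. Qed.
Lemma cV f : f 0 != 0 -> C f -> C (fun t => (f t)^-1).
Proof. by move=> ? ?; apply: cvgV. Qed.
Lemma cexp f : C f -> C (fun t => expR (f t)).
Proof. by move=> hf; apply: continuous_comp; [exact: hf | exact: continuous_expR]. Qed.
Lemma csqrt f : C f -> C (fun t => Num.sqrt (f t)).
Proof. by move=> hf; apply: continuous_comp; [exact: hf | exact: sqrt_continuous]. Qed.
Lemma cE f g : C f -> (forall t, f t = g t) -> C g.
Proof. by move=> hf fg; have <- : f = g by apply: funext. Qed.
Lemma cX2 f : C f -> C (fun t => f t ^+ 2).
Proof. by move=> hf; apply: (cE (cM hf hf)) => t; rewrite expr2. Qed.
End Cont.

Section Chart.
Variables (R : realType) (n d : nat) (beta : R) (V : 'M[R]_d)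
  (e : 'I_d -> 'rV[R]_d) (lam : 'I_d -> R) (p : 'I_d).
Hypothesis He : forall k l, dotv (e k) (e l) = (k == l)%:R.
Hypothesis Hv : forall k, Vapp V (e k) = lam k *: e k.
Variables (i0 : 'I_n) (j0 : 'I_d.-1).
Local Notation k0 := (lift p j0).
Let k0p : k0 != p. Proof. by rewrite eq_sym neq_lift. Qed.

Definition vec2 a b := a *: e p + b *: e k0.

Lemma dot_vec2 a b c d' : dotv (vec2 a b) (vec2 c d') = a * c + b * d'.
Proof.
rewrite /vec2 !dotvDl !dotvDr !dotvZl !dotvZr !He !eqxx (negbTE k0p) eq_sym (negbTE k0p) /=.
ring.
Qed.

Lemma dot_vec2_e a b k : k != p -> dotv (vec2 a b) (e k) = b * (k0 == k)%:R.
Proof.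
move=> kp; rewrite /vec2 !dotvDl !dotvZl !He eq_sym (negbTE kp) /=; ring.
Qed.

Lemma dot_vec2_ep a b : dotv (vec2 a b) (e p) = a.
Proof. by rewrite /vec2 !dotvDl !dotvZl !He eqxx (negbTE k0p) /=; ring. Qed.

Lemma Vapp_vec2 a b : Vapp V (vec2 a b) = vec2 (lam p * a) (lam k0 * b).
Proof. by rewrite /vec2 VappD !VappZ !Hv !scalerA [lam p * _]mulrC [lam k0 * _]mulrC. Qed.

Lemma vec2Z c a b : c *: vec2 a b = vec2 (c * a) (c * b).
Proof. by rewrite /vec2 scalerDr !scalerA. Qed.

Lemma vec2B a b c d' : vec2 a b - vec2 c d' = vec2 (a - c) (b - d').
Proof. by rewrite /vec2 !scalerBl opprD addrACA. Qed.

Lemma vec2_sum (I : finType) (f g : I -> R) :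
  \sum_i vec2 (f i) (g i) = vec2 (\sum_i f i) (\sum_i g i).
Proof. by rewrite /vec2 big_split /= !scaler_suml. Qed.

Lemma projT_vec2 a b c d' : projT (vec2 a b) (vec2 c d') =
  vec2 (c - (a * c + b * d') * a) (d' - (a * c + b * d') * b).
Proof. by rewrite /projT dot_vec2 vec2Z vec2B. Qed.

Definition cc (t : R) := fun (i : 'I_n) (j : 'I_d.-1) => if (i, j) == (i0, j0) then t else 0.
Definition sc (t : R) := (Num.sqrt (1 + t ^+ 2))^-1.
Definition al t (i : 'I_n) := if i == i0 then sc t else 1.
Definition be t (i : 'I_n) := if i == i0 then sc t * t else 0.

Lemma chart_row t i : row i (chart_pt e p (cc t)) = vec2 (al t i) (be t i).
Proof.
rewrite rowK /=.
have -> : \sum_j cc t i j *: e (lift p j) = (if i == i0 then t else 0) *: e k0.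
  rewrite (bigD1 j0) //= big1 ?addr0; last first.
    by move=> j jn; rewrite /cc xpair_eqE (negbTE jn) andbF scale0r.
  by rewrite /cc xpair_eqE eqxx andbT.
rewrite -[e p]scale1r -/(vec2 _ _) dot_vec2 vec2Z /al /be.
case: (i == i0); first by rewrite /sc mulr1 mul1r expr2.
by rewrite !mulr0 addr0 !mulr1 sqrtr1 invr1.
Qed.


Definition W t i j := expR (beta * (al t i * (lam p * al t j) + be t i * (lam k0 * be t j))).
Definition Zt t i := \sum_j W t i j.
Definition A1 t i := (Zt t i)^-1 * \sum_j W t i j * (lam p * al t j).
Definition A2 t i := (Zt t i)^-1 * \sum_j W t i j * (lam k0 * be t j).

Lemma chart_field_val t i j :
  chart_field beta V e p (cc t) (i, j) =
  (k0 == lift p j)%:R * (A2 t i * al t i - be t i * A1 t i) / (al t i) ^+ 2.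
Proof.
have ljp : lift p j != p by rewrite eq_sym neq_lift.
rewrite /chart_field /= /attn_field rowK.
set X := chart_pt e p (cc t).
have HX : forall i, row i X = vec2 (al t i) (be t i) by move=> i'; apply: chart_row.
have HZ : Zpart beta V X i = Zt t i.
  by apply: eq_bigr => k _; rewrite !HX Vapp_vec2 dot_vec2.
have HS : \sum_j expR (beta * dotv (row i X) (Vapp V (row j X))) *: Vapp V (row j X)
   = vec2 (\sum_j W t i j * (lam p * al t j)) (\sum_j W t i j * (lam k0 * be t j)).
  by rewrite -vec2_sum; apply: eq_bigr => k _; rewrite !HX Vapp_vec2 dot_vec2 vec2Z.
rewrite HZ HS HX vec2Z projT_vec2 !dot_vec2_ep !(dot_vec2_e _ _ ljp) /A1 /A2.
ring.
Qed.


Lemma sum_if (f : 'I_n -> R) b : (forall j, j != i0 -> f j = b) ->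
  \sum_j f j = f i0 + (n.-1)%:R * b.
Proof.
move=> Hf; rewrite (bigD1 i0) //=; congr (_ + _).
rewrite (eq_bigr (fun _ => b)) // sumr_const cardC1 card_ord.
by rewrite mulr_natl.
Qed.

Definition W0 t i := expR (beta * (al t i * (lam p * 1) + be t i * (lam k0 * 0))).

Lemma W_ne t i j : j != i0 -> W t i j = W0 t i.
Proof. by move=> jn; rewrite /W /W0 /al /be (negbTE jn). Qed.

Lemma beE t i : be t i = al t i * t * (i == i0)%:R.
Proof. by rewrite /be /al; case: (i == i0) => /=; rewrite ?mulr1 ?mulr0. Qed.

Lemma ZtE t i : Zt t i = W t i i0 + (n.-1)%:R * W0 t i.
Proof. by apply: sum_if => j jn; rewrite W_ne. Qed.

Definition gfun i (c : R) t := c * (Zt t i)^-1 *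
  (W t i i0 * lam k0 * sc t * al t i - al t i * (i == i0)%:R *
    (W t i i0 * lam p * sc t + (n.-1)%:R * W0 t i * lam p)) / al t i ^+ 2.

Lemma chart_tg t i j :
  chart_field beta V e p (cc t) (i, j) = t * gfun i (k0 == lift p j)%:R t.
Proof.
rewrite chart_field_val /A1 /A2 /gfun.
rewrite (@sum_if (fun j => W t i j * (lam p * al t j)) (W0 t i * (lam p * 1))); last first.
  by move=> j' jn; rewrite W_ne // /al (negbTE jn).
rewrite (@sum_if (fun j => W t i j * (lam k0 * be t j)) (W0 t i * (lam k0 * 0))); last first.
  by move=> j' jn; rewrite W_ne // /be (negbTE jn).
rewrite !beE /al eqxx.
have -> : (true%:R : R) = 1 by []. set c1 := (k0 == _)%:R; set c2 := (i == i0)%:R; set a := (if _ then _ else _). ring.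
Qed.

Lemma sc0 : sc 0 = 1.
Proof. by rewrite /sc expr0n /= addr0 sqrtr1 invr1. Qed.
Lemma al0 i : al 0 i = 1.
Proof. by rewrite /al sc0; case: (i == i0). Qed.
Lemma be0 i : be 0 i = 0.
Proof. by rewrite /be mulr0; case: (i == i0). Qed.

Lemma c_sc : {for (0:R), continuous sc}.
Proof.
apply: cV; first by rewrite expr0n /= addr0 sqrtr1 oner_neq0.
apply: (@csqrt _ (fun t => 1 + t ^+ 2)).
by apply: cD; [exact: cC | apply: cX2; exact: cI].
Qed.
Lemma c_al i : {for (0:R), continuous (fun t => al t i)}.
Proof. by rewrite /al; case: (i == i0); [exact: c_sc | exact: cC]. Qed.
Lemma c_be i : {for (0:R), continuous (fun t => be t i)}.
Proof. by rewrite /be; case: (i == i0); [apply: cM; [exact: c_sc | exact: cI] | exact: cC]. Qed.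
Lemma c_W i j : {for (0:R), continuous (fun t => W t i j)}.
Proof.
apply: cexp; apply: cM; first exact: cC.
apply: cD; apply: cM; try apply: cM; try exact: cC; try exact: c_al; exact: c_be.
Qed.
Lemma c_W0 i : {for (0:R), continuous (fun t => W0 t i)}.
Proof.
apply: cexp; apply: cM; first exact: cC.
apply: cD; apply: cM; try apply: cM; try exact: cC; try exact: c_al; exact: c_be.
Qed.
Lemma W00 i j : W 0 i j = expR (beta * lam p).
Proof. by rewrite /W !al0 !be0; congr expR; ring. Qed.
Lemma W000 i : W0 0 i = expR (beta * lam p).
Proof. by rewrite /W0 !al0 !be0; congr expR; ring. Qed.
Lemma Zt0 i : (0 < n)%N -> Zt 0 i = n%:R * expR (beta * lam p).
Proof.
move=> n0; rewrite ZtE W00 W000.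
have -> : (n.-1%:R : R) = n%:R - 1 by rewrite -{2}(prednK n0) -addn1 natrD addrK.
ring.
Qed.

Lemma c_gfun i c : {for (0:R), continuous (gfun i c)}.
Proof.
have nz : Zt 0 i != 0.
  rewrite ZtE W00 W000; apply: lt0r_neq0.
  by rewrite ltr_wpDr ?expR_gt0 // mulr_ge0 ?ler0n // expR_ge0.
rewrite /gfun; apply: cM; [apply: cM; [apply: cM; [exact: cC|] |] |].
- apply: cV => //; apply: (cE (f := fun t => W t i i0 + (n.-1)%:R * W0 t i)).
    by apply: cD; [exact: c_W | apply: cM; [exact: cC | exact: c_W0]].
  by move=> t; rewrite ZtE.
- apply: cB; first by apply: cM; [apply: cM; [apply: cM; [exact: c_W | exact: cC] | exact: c_sc] | exact: c_al].
  apply: cM; first by apply: cM; [exact: c_al | exact: cC].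
  apply: cD; first by apply: cM; [apply: cM; [exact: c_W | exact: cC] | exact: c_sc].
  by apply: cM; [apply: cM; [exact: cC | exact: c_W0] | exact: cC].
- apply: cV; first by rewrite al0 expr1n oner_neq0.
  by apply: cX2; exact: c_al.
Qed.

Lemma gfun0 i c : (0 < n)%N ->
  gfun i c 0 = c * (lam k0 / n%:R - (i == i0)%:R * lam p).
Proof.
move=> n0; rewrite /gfun Zt0 // W00 W000 sc0 al0.
have En : expR (beta * lam p) != 0 by apply: lt0r_neq0; exact: expR_gt0.
have nn : (n%:R : R) != 0 by rewrite pnatr_eq0 -lt0n.
have -> : (n.-1%:R : R) = n%:R - 1 by rewrite -{2}(prednK n0) -addn1 natrD addrK.
by field; rewrite nn En.
Qed.

Hypothesis n0 : (0 < n)%N.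
Lemma lin_deriv i j :
  derive1 (fun t => chart_field beta V e p
     (fun i' j' => if (i', j') == (i0, j0) then t else 0) (i, j)) 0 =
  (lift p j0 == lift p j)%:R * (lam k0 / n%:R - (i == i0)%:R * lam p).
Proof.
rewrite (@derive1_tg _ _ (gfun i (lift p j0 == lift p j)%:R)) ?gfun0 //.
  by move=> t; exact: chart_tg.
exact: c_gfun.
Qed.

End Chart.

Definition Lf (R : realType) (n d : nat) (lam : 'I_d -> R) (p : 'I_d)
  (x y : 'I_n * 'I_d.-1) : R :=
  (lift p y.2 == lift p x.2)%:R * (lam (lift p y.2) / n%:R - (x.1 == y.1)%:R * lam p).

Lemma lin_entry (R : realType) (n d : nat) (beta : R) (V : 'M[R]_d)
    (e : 'I_d -> 'rV[R]_d) (lam : 'I_d -> R) (p : 'I_d) :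
  (forall k l, dotv (e k) (e l) = (k == l)%:R) ->
  (forall k, Vapp V (e k) = lam k *: e k) -> (0 < n)%N ->
  forall a b, linearization n beta V e p a b = Lf (n:=n) lam p (enum_val a) (enum_val b).
Proof.
move=> He Hv n0 a b; rewrite /linearization mxE.
case: (enum_val b) => i0 j0; case: (enum_val a) => i j.
exact: lin_deriv.
Qed.


Lemma glue (R : realType) n d (L : 'M[R]_#|{: tidx n d}|) (F : tidx n d -> tidx n d -> R) :
 (forall a b, L a b = F (enum_val a) (enum_val b)) ->
 forall (v : 'rV[R[i]]_#|{: tidx n d}|) b,
 (v *m map_mx (fun x => (x%:C)%C) L) 0 b =
   \sum_i \sum_j v 0 (enum_rank ((i, j) : tidx n d)) * ((F (i, j) (enum_val b))%:C)%C.
Proof.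
move=> HL v b; rewrite mxE [RHS]pair_bigA /=.
rewrite (reindex (@enum_rank (tidx n d))) /=; last first.
  by apply: onW_bij; exact: enum_rank_bij.
apply: eq_bigr => x _; rewrite mxE HL enum_rankK.
by case: x.
Qed.

Lemma sum_delta (K : nzRingType) (I : finType) (f : I -> K) i0 :
  \sum_i f i * (i == i0)%:R = f i0.
Proof.
rewrite (bigD1 i0) //= eqxx mulr1 big1 ?addr0 // => i /negbTE ->.
by rewrite mulr0.
Qed.

Lemma inner_collapse (K : nzRingType) m (g : 'I_m -> K) (X : 'I_m -> K) j0 :
  \sum_j g j * ((j0 == j)%:R * X j) = g j0 * X j0.
Proof.
rewrite (bigD1 j0) //= eqxx mul1r big1 ?addr0 // => j jn.
by rewrite eq_sym (negbTE jn) mul0r mulr0.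
Qed.

Lemma stab_alg (K : fieldType) n m (w : 'I_n -> 'I_m -> K) (lk : 'I_m -> K) lp z :
  (n%:R : K) != 0 ->
  (forall i0 j0, \sum_i \sum_j w i j * ((j0 == j)%:R * (lk j0 / n%:R - (i == i0)%:R * lp))
     = z * w i0 j0) ->
  (exists i j, w i j != 0) -> z = - lp \/ exists j, z = lk j - lp.
Proof.
move=> nn H [i1 [j1 wn]].
pose sg j := \sum_i w i j.
have HA : forall i0 j0, lk j0 / n%:R * sg j0 - lp * w i0 j0 = z * w i0 j0.
  move=> i0 j0; rewrite -H.
  rewrite (eq_bigr (fun i => w i j0 * (lk j0 / n%:R - (i == i0)%:R * lp))); last first.
    by move=> i _; exact: (inner_collapse (w i) (fun _ => lk j0 / n%:R - (i == i0)%:R * lp)).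
  under eq_bigr do rewrite mulrBr.
  rewrite sumrB -mulr_suml mulrC; congr (_ - _).
  under eq_bigr do rewrite mulrCA.
  under eq_bigr do rewrite mulrC.
  by rewrite (sum_delta (fun i => w i j0 * lp)) mulrC.
have HB : forall j0, (z + lp) * sg j0 = lk j0 * sg j0.
  move=> j0; rewrite /sg mulr_sumr.
  rewrite (eq_bigr (fun _ => lk j0 / n%:R * sg j0)); last first.
    by move=> i _; rewrite mulrDl -HA; ring.
  rewrite sumr_const card_ord -[LHS]mulr_natl /sg.
  by field; rewrite nn.
case: (boolP [exists j, sg j != 0]).
  move=> /existsP [j sj]; right; exists j.
  apply/eqP; rewrite eq_sym subr_eq eq_sym; apply/eqP.
  by apply: (mulIf sj); rewrite HB.
rewrite negb_exists => /forallP sg0; left.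
have := HA i1 j1; rewrite (eqP (negPn (sg0 j1))) mulr0 sub0r -mulNr.
by move/(mulIf wn).
Qed.

Lemma unst1_alg (K : fieldType) n m (lk : 'I_m -> K) lp j (i0 : 'I_n) j0 :
  (n%:R : K) != 0 ->
  \sum_i \sum_j' (j' == j)%:R * ((j0 == j')%:R * (lk j0 / n%:R - (i == i0)%:R * lp))
  = (lk j - lp) * (j0 == j)%:R.
Proof.
move=> nn.
rewrite (eq_bigr (fun i => (j0 == j)%:R * (lk j0 / n%:R) - ((j0 == j)%:R * lp) * (i == i0)%:R)); last first.
  move=> i _; rewrite (inner_collapse (fun j' => (j' == j)%:R) (fun _ => lk j0 / n%:R - (i == i0)%:R * lp)).
  by ring.
rewrite sumrB sum_delta sumr_const card_ord.
case: (eqVneq j0 j) => [->|jn]; last first.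
  by rewrite !mulr0n !mul0r mul0rn subr0 mulr0.
rewrite !mulr1n !mul1r mulr1 -mulr_natl; by field; rewrite nn.
Qed.

Lemma unst2_alg (K : fieldType) n m (lk : 'I_m -> K) lp j (i1 i2 i0 : 'I_n) j0 :
  \sum_i \sum_j' ((j' == j)%:R * ((i == i1)%:R - (i == i2)%:R)) *
      ((j0 == j')%:R * (lk j0 / n%:R - (i == i0)%:R * lp))
  = (- lp) * ((j0 == j)%:R * ((i0 == i1)%:R - (i0 == i2)%:R)).
Proof.
pose f i := (j0 == j)%:R * (lk j0 / n%:R - (i == i0)%:R * lp).
rewrite (eq_bigr (fun i => f i * (i == i1)%:R - f i * (i == i2)%:R)); last first.
  move=> i _; rewrite (inner_collapse (fun j' => (j' == j)%:R * ((i == i1)%:R - (i == i2)%:R))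
     (fun _ => lk j0 / n%:R - (i == i0)%:R * lp)).
  by rewrite /f; ring.
rewrite sumrB !sum_delta /f (eq_sym i1) (eq_sym i2); ring.
Qed.

Lemma Lf_C (R : realType) n d (lam : 'I_d -> R) p (i i0 : 'I_n) (j j0 : 'I_d.-1) :
  ((Lf lam p (i, j) (i0, j0))%:C)%C =
  (j0 == j)%:R * (((lam (lift p j0))%:C)%C / n%:R - (i == i0)%:R * ((lam p)%:C)%C).
Proof.
by rewrite /Lf /= (inj_eq (@lift_inj _ p)) rmorphM rmorph_nat rmorphB fmorph_div
  rmorphM !rmorph_nat.
Qed.

Theorem proposition5p1 (R : realType) (n d : nat) (beta : R) (V : 'M[R]_d)
    (e : 'I_d -> 'rV[R]_d) (lam : 'I_d -> R) (p : 'I_d) :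
  0 < beta ->
  (1 <= n)%N ->
  V^T = V ->
  (forall k l : 'I_d, dotv (e k) (e l) = (k == l)%:R) ->
  (forall k : 'I_d, Vapp V (e k) = lam k *: e k) ->
  attn_field beta V (Xstar n e p) = 0 /\
  ((0 < lam p /\ (forall k : 'I_d, k != p -> lam k < lam p)) ->
     lin_asymp_stable (linearization n beta V e p)) /\
  (((1 < n)%N /\ (1 < d)%N /\ lam p < 0) \/ (exists k : 'I_d, k != p /\ lam p < lam k) ->
     lin_unstable (linearization n beta V e p)).
Proof.
move=> bpos n1 VT He Hv.
have HL := @lin_entry R n d beta V e lam p He Hv n1.
have nnC : (n%:R : R[i]) != 0 by rewrite pnatr_eq0 -lt0n.
split.
  apply/row_matrixP => i; rewrite row0 /attn_field rowK /Xstar rowK.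
  under eq_bigr do rewrite rowK Hv scalerA.
  by rewrite -scaler_suml scalerA /projT !dotvZr !He eqxx /= mulr1n !mulr1 subrr.
split.
  move=> [lp0 lkp] z; rewrite /cplx_eigenvalue => /eigenvalueP [v vM vn0].
  pose w i j := v 0 (enum_rank ((i, j) : tidx n d)).
  have H : forall i0 j0, \sum_i \sum_j w i j * ((j0 == j)%:R *
      (((lam (lift p j0))%:C)%C / n%:R - (i == i0)%:R * ((lam p)%:C)%C)) = z * w i0 j0.
    move=> i0 j0; have := congr1 (fun M : 'rV[R[i]]_#|{: tidx n d}| => M 0 (enum_rank ((i0, j0) : tidx n d))) vM.
    rewrite (glue HL) enum_rankK [in RHS]mxE => <-.
    by apply: eq_bigr => i _; apply: eq_bigr => j _; rewrite Lf_C.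
  have [i1 [j1 wn]] : exists i j, w i j != 0.
    have [a va] : exists a, v 0 a != 0.
      apply/existsP; move: vn0; apply: contraR; rewrite negb_exists => /forallP v0.
      by apply/eqP/rowP => a; rewrite mxE; apply/eqP; exact: negbNE (v0 a).
    exists (enum_val a).1, (enum_val a).2.
    by rewrite /w -surjective_pairing enum_valK.
  have [->|[j ->]] := stab_alg nnC H (ex_intro _ i1 (ex_intro _ j1 wn)).
    by rewrite -rmorphN /= oppr_lt0.
  by rewrite -rmorphB /= subr_lt0 lkp // eq_sym neq_lift.
case=> [[n2 [d2 lpn]] | [k [kp lk]]]; last first.
  have pk : p != k by rewrite eq_sym.
  have [j kE _] := unlift_some pk.
  pose v : 'rV[R[i]]_#|{: tidx n d}| := \row_a (((enum_val a).2 == j)%:R).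
  exists ((lam k - lam p)%:C)%C; split; last by rewrite /= subr_gt0.
  apply/eigenvalueP; exists v.
    apply/rowP => b; rewrite (glue HL) [RHS]mxE [in RHS]mxE.
    case Eb: (enum_val b) => [i0 j0].
    rewrite (eq_bigr (fun i => \sum_j' (j' == j)%:R * ((j0 == j')%:R *
      (((lam (lift p j0))%:C)%C / n%:R - (i == i0)%:R * ((lam p)%:C)%C)))); last first.
      by move=> i _; apply: eq_bigr => j' _; rewrite mxE enum_rankK Lf_C.
    have := @unst1_alg _ n _ (fun j => ((lam (lift p j))%:C)%C) ((lam p)%:C)%C j i0 j0 nnC.
    by rewrite /= => ->; rewrite -kE rmorphB.
  apply/negP => /eqP v0.
  have := congr1 (fun M : 'rV[R[i]]_#|{: tidx n d}| => M 0 (enum_rank ((Ordinal n1, j) : tidx n d))) v0.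
  by rewrite !mxE enum_rankK eqxx /= => /eqP; rewrite oner_eq0.
have dpos : (0 < d.-1)%N by lia.
pose j : 'I_d.-1 := Ordinal dpos.
pose i1 : 'I_n := Ordinal n1.
pose i2 : 'I_n := Ordinal n2.
have i12 : (i1 == i2) = false by [].
pose v : 'rV[R[i]]_#|{: tidx n d}| := \row_a (((enum_val a).2 == j)%:R *
   (((enum_val a).1 == i1)%:R - ((enum_val a).1 == i2)%:R)).
exists ((- lam p)%:C)%C; split; last by rewrite /= oppr_gt0.
apply/eigenvalueP; exists v.
  apply/rowP => b; rewrite (glue HL) [RHS]mxE [in RHS]mxE.
  case Eb: (enum_val b) => [i0 j0] /=.
  rewrite (eq_bigr (fun i => \sum_j' ((j' == j)%:R * ((i == i1)%:R - (i == i2)%:R)) *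
    ((j0 == j')%:R *
    (((lam (lift p j0))%:C)%C / n%:R - (i == i0)%:R * ((lam p)%:C)%C)))); last first.
    by move=> i _; apply: eq_bigr => j' _; rewrite mxE enum_rankK Lf_C.
  have := @unst2_alg _ n _ (fun j => ((lam (lift p j))%:C)%C) ((lam p)%:C)%C j i1 i2 i0 j0.
  by rewrite /= => ->; rewrite rmorphN.
apply/negP => /eqP v0.
have := congr1 (fun M : 'rV[R[i]]_#|{: tidx n d}| => M 0 (enum_rank ((i1, j) : tidx n d))) v0.
by rewrite !mxE enum_rankK /= subr0 mul1r => /eqP; rewrite oner_eq0.
Qed.
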